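(* Let $\mathcal{G}$ be a group prevariety over a finite alphabet $A$, let $\alpha:A^*\to M$ be a surjective morphism into a finite monoid, and let $N$ be the $\mathcal{G}$-kernel of $\alpha$. Then: (1) every $\mathcal{G}$-orbit for $\alpha$ is a subset of $N$; (2) $N$ is exactly the $\mathcal{G}$-orbit of $1_M$ for $\alpha$.
   Context: Fix a finite alphabet $A$. A prevariety is a class of regular languages over $A$ containing $\emptyset$ and $A^*$, closed under union, intersection, complement, and under the quotients $u^{-1}L=\{w\mid uw\in L\}$ and $Lu^{-1}=\{w\mid wu\in L\}$; a group prevariety is a prevariety all of whose languages are recognized by morphisms into finite groups. $L_1$ is $\mathcal{G}$-separable from $L_2$ if some $K\in\mathcal{G}$ satisfies $L_1\subseteq K$, $K\cap L_2=\emptyset$. For $\alpha:A^*\to M$: $(s,t)\in M^2$ is a $\mathcal{G}$-pair if $\alpha^{-1}(s)$ is not $\mathcal{G}$-separable from $\alpha^{-1}(t)$; for an idempotent $e\in M$, the $\mathcal{G}$-orbit of $e$ is $\{ese\mid (e,s)\text{ is a }\mathcal{G}\text{-pair}\}$; the $\mathcal{G}$-orbits for $\alpha$ are the $\mathcal{G}$-orbits of the idempotents of $M$; the $\mathcal{G}$-kernel of $\alpha$ is the set of $s\in M$ such that $\{\varepsilon\}$ is not $\mathcal{G}$-separable from $\alpha^{-1}(s)$. *)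

(* Defs.v *)
From mathcomp Require Import all_boot all_fingroup.
Set Implicit Arguments. Unset Strict Implicit. Unset Printing Implicit Defensive.

Definition lang (A : finType) := seq A -> bool.

Definition is_monoid_morphism (A : finType) (M : Type) (mul : M -> M -> M) (one : M)
  (h : seq A -> M) : Prop :=
  h [::] = one /\ forall u v, h (u ++ v) = mul (h u) (h v).

Definition monoid_laws (M : Type) (mul : M -> M -> M) (one : M) : Prop :=
  (forall x y z, mul x (mul y z) = mul (mul x y) z) /\
  (forall x, mul one x = x) /\ (forall x, mul x one = x).

Definition regular (A : finType) (L : lang A) : Prop :=
  exists (Q : finType) (delta : Q -> A -> Q) (q0 : Q) (F : {set Q}),
    forall w, L w = (foldl delta q0 w \in F).

Definition prevariety (A : finType) (C : lang A -> Prop) : Prop :=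
  (forall L, C L -> regular L) /\
  C (fun _ => false) /\ C (fun _ => true) /\
  (forall L1 L2, C L1 -> C L2 -> C (fun w => L1 w || L2 w)) /\
  (forall L1 L2, C L1 -> C L2 -> C (fun w => L1 w && L2 w)) /\
  (forall L, C L -> C (fun w => ~~ L w)) /\
  (forall L u, C L -> C (fun w => L (u ++ w))) /\
  (forall L u, C L -> C (fun w => L (w ++ u))).

Definition group_recognized (A : finType) (L : lang A) : Prop :=
  exists (gT : finGroupType) (h : seq A -> gT) (F : {set gT}),
    is_monoid_morphism (fun x y : gT => (x * y)%g) 1%g h /\
    forall w, L w = (h w \in F).

Definition group_prevariety (A : finType) (C : lang A -> Prop) : Prop :=
  prevariety C /\ forall L, C L -> group_recognized L.

Definition separable (A : finType) (C : lang A -> Prop) (L1 L2 : lang A) : Prop :=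
  exists K, C K /\ (forall w, L1 w -> K w) /\ (forall w, K w -> ~~ L2 w).

Section Pairs.
Variables (A : finType) (C : lang A -> Prop) (M : finType) (alpha : seq A -> M).

Definition preim (s : M) : lang A := fun w => alpha w == s.

Definition C_pair (s t : M) : Prop := ~ separable C (preim s) (preim t).

(* The C-orbit of e (meaningful for idempotents e). *)
Definition C_orbit (mul : M -> M -> M) (e : M) (x : M) : Prop :=
  exists s, C_pair e s /\ x = mul (mul e s) e.

Definition C_kernel (s : M) : Prop :=
  ~ separable C (fun w => w == [::]) (preim s).
End Pairs.

(* Main.v *)
Require Import Defs.
From mathcomp Require Import all_boot all_fingroup.
From mathcomp Require Import all_solvable.
From Stdlib Require Import Classical.

Lemma union_C (A : finType) (C : lang A -> Prop) (I : Type) (s : seq I)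
  (L : I -> lang A) :
  C (fun _ => false) -> (forall L1 L2, C L1 -> C L2 -> C (fun w => L1 w || L2 w)) ->
  (forall i, C (L i)) -> C (fun w => has (fun i => L i w) s).
Proof.
move=> H0 HU HL; elim: s => [|i s IH] //=.
exact: (HU _ _ (HL i) IH).
Qed.

Definition wpow {A : Type} (k : nat) (u : seq A) : seq A := flatten (nseq k u).

Lemma wpow_morph (A : finType) (gT : finGroupType) (h : seq A -> gT) k u :
  is_monoid_morphism (fun x y : gT => (x * y)%g) 1%g h -> h (wpow k u) = (h u ^+ k)%g.
Proof.
move=> [h0 hM]; elim: k => [|k IH] //=.
by rewrite /wpow /= hM -/(wpow k u) IH expgS.
Qed.

Lemma wpow_idem (A : finType) (M : Type) (mul : M -> M -> M) one (al : seq A -> M) k u e :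
  monoid_laws mul one -> is_monoid_morphism mul one al -> al u = e -> mul e e = e ->
  al (wpow k.+1 u) = e.
Proof.
move=> [_ [_ m1]] [a0 aM] Hu He; elim: k => [|k IH].
  by rewrite /wpow /= cats0.
by rewrite /wpow /= aM -/(wpow k.+1 u) IH Hu He.
Qed.

Theorem lemma5p10 (A : finType) (C : lang A -> Prop) (M : finType)
  (mul : M -> M -> M) (one : M) (alpha : seq A -> M) :
  group_prevariety C ->
  monoid_laws mul one ->
  is_monoid_morphism mul one alpha ->
  (forall m : M, exists w, alpha w = m) ->
  (forall e : M, mul e e = e ->
     forall x : M, C_orbit C alpha mul e x -> C_kernel C alpha x) /\
  (forall x : M, C_orbit C alpha mul one x <-> C_kernel C alpha x).
Proof.
move=> [[_ [H0 [_ [HU [_ [_ [HQl HQr]]]]]]] Hgr] ML AM Hsurj.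
have ML' := ML; move: ML' => [Massoc [M1l M1r]].
have AM' := AM; move: AM' => [a0 aM].
have part1 : forall e : M, mul e e = e ->
     forall x : M, C_orbit C alpha mul e x -> C_kernel C alpha x.
  move=> e He x [s [Hpair ->]] [K [CK [Keps Kx]]].
  apply: Hpair.
  have [gT [h [F [hM HK]]]] := Hgr K CK.
  have hM' := hM; move: hM' => [h0 hMul].
  have [u Hu] := Hsurj e.
  set n := #|[set: gT]|.
  have n_gt0 : 0 < n by rewrite /n cardsT; apply/card_gt0P; exists 1%g.
  have gn : forall g : gT, (g ^+ n = 1)%g.
    by move=> g; apply: (expg_cardG (G := [set: gT]%G)); rewrite inE.
  have one_F : (1%g : gT) \in F by rewrite -h0 -HK; apply: Keps.
  set z := wpow n u.
  have az : alpha z = e by have := @wpow_idem _ _ _ _ _ n.-1 _ _ ML AM Hu He; rewrite prednK.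
  have hz : h z = 1%g by rewrite /z wpow_morph // gn.
  have [vg Hvg] : exists vg : gT -> option (seq A), forall g,
      (forall v, vg g = Some v -> alpha v = e /\ h v = g) /\
      ((exists v, alpha v = e /\ h v = g) -> vg g <> None).
    have Hex : forall g : gT, exists o : option (seq A),
      (forall v, o = Some v -> alpha v = e /\ h v = g) /\
      ((exists v, alpha v = e /\ h v = g) -> o <> None).
      move=> g; case: (classic (exists v, alpha v = e /\ h v = g)) => [[v Hv]|Hn].
        by exists (Some v); split=> [v' [<-]|]. 
      by exists None; split=> // v' [].
    exact: (fin_all_exists Hex).
  pose L := fun g : gT => fun w => match vg g with Some v => K (z ++ w ++ v) | None => false end.
  exists (fun w => has (fun g => L g w) (enum gT)); split.
    apply: union_C => // g; rewrite /L; case: (vg g) => [v|] //.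
    exact: (HQr (fun w => K (z ++ w)) v (HQl K z CK)).
  split.
    move=> w /eqP Hw.
    set m := (n.-1 + n.-1)%N.
    have am : alpha (wpow m.+1 w) = e by apply: (@wpow_idem _ _ _ _ _ m _ _ ML AM Hw He).
    have hm : h (wpow m.+1 w) = (h w)^-1%g.
      rewrite wpow_morph //.
      apply: (mulgI (h w)); rewrite mulgV -expgS.
      have -> : m.+2 = (n + n)%N by rewrite /m -addSn -addnS (prednK n_gt0).
      by rewrite expgD gn mulg1.
    have [Hs Hne] := Hvg (h (wpow m.+1 w)).
    apply/hasP; exists (h (wpow m.+1 w)); first by rewrite mem_enum.
    rewrite /L; case E: (vg _) => [v|]; last by exfalso; apply: Hne => //; exists (wpow m.+1 w).
    have [_ hv] := Hs v E.
    by rewrite HK !hMul hz hv hm mul1g mulgV.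
  move=> w /hasP [g _]; rewrite /L; case E: (vg g) => [v|] // Kw.
  have [av _] := (proj1 (Hvg g)) v E.
  move: (Kx _ Kw); rewrite /Defs.preim !aM az av Massoc.
  by apply: contra => /eqP ->.
split => // x; split.
  by apply: part1; rewrite M1l.
move=> Hk; exists x; split; last by rewrite M1l M1r.
move=> [K [CK [K1 Kx]]]; apply: Hk; exists K; split => //; split => // w /eqP ->.
by apply: K1; rewrite /Defs.preim a0.
Qed.
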